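(* In the setting below, suppose $u(s,t,q)=l(s,t)U(q)$, $v(s,t,q)=m(s,t)V(q)$, $w(s,t,q)=n(s,t)W(q)$, $x(s,t,q)=p(s,t)X(q)$ with all factors of class $C^1$, and assume $U(q_0)=U'(q_0)=V(q_0)=V'(q_0)=0$. Then $\mathbf r$ is an isogeodesic of $\mathbf P$ at $(t_0,q_0)$ if and only if for all $s\in[L_1,L_2]$: $$n(s,t_0)W(q_0)=0,\qquad p(s,t_0)X(q_0)=0,$$ $$\frac{\partial n}{\partial t}(s,t_0)\,W(q_0)\,p(s,t_0)\,X'(q_0)-n(s,t_0)\,W'(q_0)\,\frac{\partial p}{\partial t}(s,t_0)\,X(q_0)\neq0.$$
   Context: $\mathbf r:[L_1,L_2]\to\mathbb R^4$ is an arc-length curve with Frenet frame $\{\mathbf T,\mathbf N,\mathbf B_1,\mathbf B_2\}$ (orthonormal, $\mathbf T=\mathbf r'$, $\mathbf T'=k_1\mathbf N$, $\mathbf N'=-k_1\mathbf T+k_2\mathbf B_1$, $\mathbf B_1'=-k_2\mathbf N+k_3\mathbf B_2$, $\mathbf B_2'=-k_3\mathbf B_1$, $k_1>0$), and $\mathbf P(s,t,q)=\mathbf r(s)+u\mathbf T(s)+v\mathbf N(s)+w\mathbf B_1(s)+x\mathbf B_2(s)$ on $[L_1,L_2]\times[T_1,T_2]\times[Q_1,Q_2]$, with $t_0\in[T_1,T_2]$, $q_0\in[Q_1,Q_2]$ fixed. ''$\mathbf r$ is an isogeodesic of $\mathbf P$ at $(t_0,q_0)$'' means: $\mathbf P(s,t_0,q_0)=\mathbf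 r(s)$ for all $s$, $\partial_s\mathbf P,\partial_t\mathbf P,\partial_q\mathbf P$ are linearly independent at $(s,t_0,q_0)$, and $\mathbf N(s)$ is parallel to the normal $\partial_s\mathbf P\otimes\partial_t\mathbf P\otimes\partial_q\mathbf P$ (four-dimensional vector product) at $(s,t_0,q_0)$, for all $s$. *)

(* Defs.v *)
From Stdlib Require Import Reals.
Open Scope R_scope.

Record V4 := mkV4 { c1 : R; c2 : R; c3 : R; c4 : R }.

Definition vzero : V4 := mkV4 0 0 0 0.
Definition vadd (a b : V4) : V4 :=
  mkV4 (c1 a + c1 b) (c2 a + c2 b) (c3 a + c3 b) (c4 a + c4 b).
Definition vscale (k : R) (a : V4) : V4 :=
  mkV4 (k * c1 a) (k * c2 a) (k * c3 a) (k * c4 a).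
Definition vdot (a b : V4) : R :=
  c1 a * c1 b + c2 a * c2 b + c3 a * c3 b + c4 a * c4 b.

Definition det3 (a1 a2 a3 b1 b2 b3 d1 d2 d3 : R) : R :=
  a1 * (b2 * d3 - b3 * d2) - a2 * (b1 * d3 - b3 * d1) + a3 * (b1 * d2 - b2 * d1).

(* Four-dimensional vector product a (x) b (x) c, i.e. the formal determinant
   det [e1 e2 e3 e4; a; b; c] expanded along the first row. *)
Definition cross4 (a b c : V4) : V4 :=
  mkV4
    (  det3 (c2 a) (c3 a) (c4 a) (c2 b) (c3 b) (c4 b) (c2 c) (c3 c) (c4 c))
    (- det3 (c1 a) (c3 a) (c4 a) (c1 b) (c3 b) (c4 b) (c1 c) (c3 c) (c4 c))
    (  det3 (c1 a) (c2 a) (c4 a) (c1 b) (c2 b) (c4 b) (c1 c) (c2 c) (c4 c))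
    (- det3 (c1 a) (c2 a) (c3 a) (c1 b) (c2 b) (c3 b) (c1 c) (c2 c) (c3 c)).

Definition lin_indep3 (a b c : V4) : Prop :=
  forall al be ga : R,
    vadd (vscale al a) (vadd (vscale be b) (vscale ga c)) = vzero ->
    al = 0 /\ be = 0 /\ ga = 0.

Definition parallel (a b : V4) : Prop := exists k : R, b = vscale k a.

Definition vderiv (f : R -> V4) (x : R) (d : V4) : Prop :=
  derivable_pt_lim (fun y => c1 (f y)) x (c1 d) /\
  derivable_pt_lim (fun y => c2 (f y)) x (c2 d) /\
  derivable_pt_lim (fun y => c3 (f y)) x (c3 d) /\
  derivable_pt_lim (fun y => c4 (f y)) x (c4 d).

Definition inI (a b x : R) : Prop := a <= x <= b.

Definition frenet_curve (L1 L2 : R) (r T N B1 B2 : R -> V4) (k1 k2 k3 : R -> R)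
  : Prop :=
  forall s, inI L1 L2 s ->
    vdot (T s) (T s) = 1 /\ vdot (N s) (N s) = 1 /\
    vdot (B1 s) (B1 s) = 1 /\ vdot (B2 s) (B2 s) = 1 /\
    vdot (T s) (N s) = 0 /\ vdot (T s) (B1 s) = 0 /\ vdot (T s) (B2 s) = 0 /\
    vdot (N s) (B1 s) = 0 /\ vdot (N s) (B2 s) = 0 /\ vdot (B1 s) (B2 s) = 0 /\
    0 < k1 s /\
    vderiv r s (T s) /\
    vderiv T s (vscale (k1 s) (N s)) /\
    vderiv N s (vadd (vscale (- k1 s) (T s)) (vscale (k2 s) (B1 s))) /\
    vderiv B1 s (vadd (vscale (- k2 s) (N s)) (vscale (k3 s) (B2 s))) /\
    vderiv B2 s (vscale (- k3 s) (B1 s)).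

Definition Pmap (r T N B1 B2 : R -> V4) (u v w x : R -> R -> R -> R)
  (s t q : R) : V4 :=
  vadd (r s) (vadd (vscale (u s t q) (T s)) (vadd (vscale (v s t q) (N s))
    (vadd (vscale (w s t q) (B1 s)) (vscale (x s t q) (B2 s))))).

Definition isogeodesic (L1 L2 : R) (r N : R -> V4) (P : R -> R -> R -> V4)
  (t0 q0 : R) : Prop :=
  (forall s, inI L1 L2 s -> P s t0 q0 = r s) /\
  (forall s, inI L1 L2 s ->
     exists Ps Pt Pq : V4,
       vderiv (fun s' => P s' t0 q0) s Ps /\
       vderiv (fun t' => P s t' q0) t0 Pt /\
       vderiv (fun q' => P s t0 q') q0 Pq /\
       lin_indep3 Ps Pt Pq /\
       parallel (N s) (cross4 Ps Pt Pq)).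

Definition cont_on1 (a b : R) (f : R -> R) : Prop :=
  forall x, inI a b x -> forall eps, 0 < eps -> exists delta, 0 < delta /\
    forall y, inI a b y -> Rabs (y - x) < delta -> Rabs (f y - f x) < eps.

Definition cont_on2 (a b c d : R) (f : R -> R -> R) : Prop :=
  forall x y, inI a b x -> inI c d y -> forall eps, 0 < eps ->
    exists delta, 0 < delta /\
    forall x' y', inI a b x' -> inI c d y' ->
      Rabs (x' - x) < delta -> Rabs (y' - y) < delta ->
      Rabs (f x' y' - f x y) < eps.

Definition C1_on1 (a b : R) (f f' : R -> R) : Prop :=
  (forall x, inI a b x -> derivable_pt_lim f x (f' x)) /\ cont_on1 a b f'.

Definition C1_on2 (a b c d : R) (f fs ft : R -> R -> R) : Prop :=
  (forall x y, inI a b x -> inI c d y ->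
     derivable_pt_lim (fun x' => f x' y) x (fs x y) /\
     derivable_pt_lim (fun y' => f x y') y (ft x y)) /\
  cont_on2 a b c d fs /\ cont_on2 a b c d ft.

(* Main.v *)
Require Import Defs.
From Stdlib Require Import Reals.
Open Scope R_scope.
From Stdlib Require Import Lra Psatz.
Import Defs.

Definition det4 (a1 a2 a3 a4 b1 b2 b3 b4 c1 c2 c3 c4 d1 d2 d3 d4 : R) : R :=
  a1 * det3 b2 b3 b4 c2 c3 c4 d2 d3 d4 - a2 * det3 b1 b3 b4 c1 c3 c4 d1 d3 d4
 + a3 * det3 b1 b2 b4 c1 c2 c4 d1 d2 d4 - a4 * det3 b1 b2 b3 c1 c2 c3 d1 d2 d3.

Lemma gram (a b c d : V4) :
  let M := det4 (c1 a) (c2 a) (c3 a) (c4 a) (c1 b) (c2 b) (c3 b) (c4 b) (c1 c) (c2 c) (c3 c) (c4 c) (c1 d) (c2 d) (c3 d) (c4 d) in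
  M * M = det4 (vdot a a) (vdot a b) (vdot a c) (vdot a d) (vdot b a) (vdot b b) (vdot b c) (vdot b d)
   (vdot c a) (vdot c b) (vdot c c) (vdot c d) (vdot d a) (vdot d b) (vdot d c) (vdot d d).
Proof. destruct a, b, c, d; unfold det4, det3, vdot; simpl. ring. Qed.

Lemma V4ext (a b : V4) : c1 a = c1 b -> c2 a = c2 b -> c3 a = c3 b -> c4 a = c4 b -> a = b.
Proof. destruct a, b; simpl; intros; subst; reflexivity. Qed.

Lemma vdot_comm a b : vdot a b = vdot b a.
Proof. unfold vdot; ring. Qed.
Lemma vdot_add_l a b c : vdot (vadd a b) c = vdot a c + vdot b c.
Proof. unfold vdot, vadd; simpl; ring. Qed.
Lemma vdot_scale_l k a c : vdot (vscale k a) c = k * vdot a c.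
Proof. unfold vdot, vscale; simpl; ring. Qed.
Lemma vdot_zero_l c : vdot vzero c = 0.
Proof. unfold vdot, vzero; simpl; ring. Qed.

Lemma complete (T N B1 B2 z : V4) :
  vdot T T = 1 -> vdot N N = 1 -> vdot B1 B1 = 1 -> vdot B2 B2 = 1 ->
  vdot T N = 0 -> vdot T B1 = 0 -> vdot T B2 = 0 ->
  vdot N B1 = 0 -> vdot N B2 = 0 -> vdot B1 B2 = 0 ->
  vdot z T = 0 -> vdot z N = 0 -> vdot z B1 = 0 -> vdot z B2 = 0 -> z = vzero.
Proof.
  intros tt nn bb cc tn tb tc nb nc bc zt zn zb zc.
  pose proof (gram T N B1 B2) as G. cbv zeta in G.
  set (M := det4 (c1 T) (c2 T) (c3 T) (c4 T) (c1 N) (c2 N) (c3 N) (c4 N)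
    (c1 B1) (c2 B1) (c3 B1) (c4 B1) (c1 B2) (c2 B2) (c3 B2) (c4 B2)) in G.
  rewrite (vdot_comm N T), (vdot_comm B1 T), (vdot_comm B2 T), (vdot_comm B1 N),
    (vdot_comm B2 N), (vdot_comm B2 B1) in G.
  rewrite tt, nn, bb, cc, tn, tb, tc, nb, nc, bc in G.
  assert (HM : M <> 0).
  { intro H0. rewrite H0 in G. unfold det4, det3 in G. lra. }
  rewrite (vdot_comm z) in zt, zn, zb, zc.
  destruct z as [z1 z2 z3 z4].
  assert (K1 : M * z1 = 0).
  { transitivity (det4 (vdot T (mkV4 z1 z2 z3 z4)) (c2 T) (c3 T) (c4 T)
                       (vdot N (mkV4 z1 z2 z3 z4)) (c2 N) (c3 N) (c4 N)
                       (vdot B1 (mkV4 z1 z2 z3 z4)) (c2 B1) (c3 B1) (c4 B1)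
                       (vdot B2 (mkV4 z1 z2 z3 z4)) (c2 B2) (c3 B2) (c4 B2)).
    { unfold M, det4, det3, vdot; simpl; ring. }
    rewrite zt, zn, zb, zc; unfold det4, det3; ring. }
  assert (K2 : M * z2 = 0).
  { transitivity (det4 (c1 T) (vdot T (mkV4 z1 z2 z3 z4)) (c3 T) (c4 T)
                       (c1 N) (vdot N (mkV4 z1 z2 z3 z4)) (c3 N) (c4 N)
                       (c1 B1) (vdot B1 (mkV4 z1 z2 z3 z4)) (c3 B1) (c4 B1)
                       (c1 B2) (vdot B2 (mkV4 z1 z2 z3 z4)) (c3 B2) (c4 B2)).
    { unfold M, det4, det3, vdot; simpl; ring. }
    rewrite zt, zn, zb, zc; unfold det4, det3; ring. }
  assert (K3 : M * z3 = 0).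
  { transitivity (det4 (c1 T) (c2 T) (vdot T (mkV4 z1 z2 z3 z4)) (c4 T)
                       (c1 N) (c2 N) (vdot N (mkV4 z1 z2 z3 z4)) (c4 N)
                       (c1 B1) (c2 B1) (vdot B1 (mkV4 z1 z2 z3 z4)) (c4 B1)
                       (c1 B2) (c2 B2) (vdot B2 (mkV4 z1 z2 z3 z4)) (c4 B2)).
    { unfold M, det4, det3, vdot; simpl; ring. }
    rewrite zt, zn, zb, zc; unfold det4, det3; ring. }
  assert (K4 : M * z4 = 0).
  { transitivity (det4 (c1 T) (c2 T) (c3 T) (vdot T (mkV4 z1 z2 z3 z4))
                       (c1 N) (c2 N) (c3 N) (vdot N (mkV4 z1 z2 z3 z4))
                       (c1 B1) (c2 B1) (c3 B1) (vdot B1 (mkV4 z1 z2 z3 z4))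
                       (c1 B2) (c2 B2) (c3 B2) (vdot B2 (mkV4 z1 z2 z3 z4))).
    { unfold M, det4, det3, vdot; simpl; ring. }
    rewrite zt, zn, zb, zc; unfold det4, det3; ring. }
  apply Rmult_integral in K1, K2, K3, K4.
  destruct K1, K2, K3, K4; try contradiction; subst; reflexivity.
Qed.

Lemma cross_orth1 a b c : vdot (cross4 a b c) a = 0.
Proof. destruct a, b, c; unfold cross4, det3, vdot; simpl; ring. Qed.
Lemma cross_orth2 a b c : vdot (cross4 a b c) b = 0.
Proof. destruct a, b, c; unfold cross4, det3, vdot; simpl; ring. Qed.
Lemma cross_orth3 a b c : vdot (cross4 a b c) c = 0.
Proof. destruct a, b, c; unfold cross4, det3, vdot; simpl; ring. Qed.

Lemma cross_lin (T B1 B2 : V4) A B a b c d :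
  cross4 (vadd T (vadd (vscale A B1) (vscale B B2))) (vadd (vscale a B1) (vscale b B2))
         (vadd (vscale c B1) (vscale d B2)) = vscale (a*d - b*c) (cross4 T B1 B2).
Proof. destruct T, B1, B2; unfold cross4, det3, vadd, vscale; simpl; f_equal; ring. Qed.

Lemma vderiv_add f g x df dg : vderiv f x df -> vderiv g x dg ->
  vderiv (fun y => vadd (f y) (g y)) x (vadd df dg).
Proof.
  intros (F1 & F2 & F3 & F4) (G1 & G2 & G3 & G4).
  unfold vadd; simpl; repeat split; apply derivable_pt_lim_plus; assumption.
Qed.

Lemma dmul (f g : R -> R) x df dg : derivable_pt_lim f x df -> derivable_pt_lim g x dg ->
  derivable_pt_lim (fun y => f y * g y) x (df * g x + f x * dg).
Proof. intros; apply (derivable_pt_lim_mult f g); assumption. Qed.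

Lemma vderiv_scale g h x dg dh : derivable_pt_lim g x dg -> vderiv h x dh ->
  vderiv (fun y => vscale (g y) (h y)) x (vadd (vscale dg (h x)) (vscale (g x) dh)).
Proof.
  intros Hg (F1 & F2 & F3 & F4).
  unfold vadd, vscale; simpl; repeat split; apply dmul; assumption.
Qed.

Lemma vderiv_const a x : vderiv (fun _ => a) x vzero.
Proof. unfold vzero; repeat split; simpl; apply derivable_pt_lim_const. Qed.

Lemma dmul_const_r f c x d : derivable_pt_lim f x d -> derivable_pt_lim (fun y => f y * c) x (d * c).
Proof.
  intro H. replace (d * c) with (d * c + f x * 0) by ring.
  apply dmul; [assumption | apply derivable_pt_lim_const].
Qed.
Lemma dmul_const_l f c x d : derivable_pt_lim f x d -> derivable_pt_lim (fun y => c * f y) x (c * d).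
Proof.
  intro H. replace (c * d) with (0 * f x + c * d) by ring.
  apply dmul; [apply derivable_pt_lim_const | assumption].
Qed.

Lemma vderiv_ext f x d d' : vderiv f x d -> d = d' -> vderiv f x d'.
Proof. intros; subst; assumption. Qed.

Lemma vderiv_unique f x d d' : vderiv f x d -> vderiv f x d' -> d = d'.
Proof.
  intros (F1 & F2 & F3 & F4) (G1 & G2 & G3 & G4).
  apply V4ext; eapply uniqueness_limite; eassumption.
Qed.

Lemma combo_zero (P Q S B1 B2 : V4) al be ga a b c d :
  Q = vadd (vscale a B1) (vscale b B2) -> S = vadd (vscale c B1) (vscale d B2) ->
  al = 0 -> be*a+ga*c = 0 -> be*b+ga*d = 0 ->
  vadd (vscale al P) (vadd (vscale be Q) (vscale ga S)) = vzero.
Proof.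
  intros -> -> -> E1 E2. destruct B1 as [x1 x2 x3 x4], B2 as [y1 y2 y3 y4].
  unfold vadd, vscale, vzero; simpl; f_equal;
  [ transitivity (x1*(be*a+ga*c) + y1*(be*b+ga*d))
  | transitivity (x2*(be*a+ga*c) + y2*(be*b+ga*d))
  | transitivity (x3*(be*a+ga*c) + y3*(be*b+ga*d))
  | transitivity (x4*(be*a+ga*c) + y4*(be*b+ga*d)) ];
  try ring; rewrite E1, E2; ring.
Qed.
Ltac dtac := repeat first
  [ apply vderiv_add | apply vderiv_scale | apply vderiv_const
  | apply dmul_const_r | apply dmul_const_l | eassumption ].

Theorem mainTheorem3
  (L1 L2 T1 T2 Q1 Q2 t0 q0 : R)
  (r T N B1 B2 : R -> V4) (k1 k2 k3 : R -> R)
  (l m n p ls lt ms mt ns nt ps pt : R -> R -> R)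
  (U V W X U' V' W' X' : R -> R)
  (Hframe : frenet_curve L1 L2 r T N B1 B2 k1 k2 k3)
  (Ht0 : inI T1 T2 t0) (Hq0 : inI Q1 Q2 q0)
  (Hl : C1_on2 L1 L2 T1 T2 l ls lt) (Hm : C1_on2 L1 L2 T1 T2 m ms mt)
  (Hn : C1_on2 L1 L2 T1 T2 n ns nt) (Hp : C1_on2 L1 L2 T1 T2 p ps pt)
  (HU : C1_on1 Q1 Q2 U U') (HV : C1_on1 Q1 Q2 V V')
  (HW : C1_on1 Q1 Q2 W W') (HX : C1_on1 Q1 Q2 X X')
  (HU0 : U q0 = 0) (HU'0 : U' q0 = 0) (HV0 : V q0 = 0) (HV'0 : V' q0 = 0) :
  isogeodesic L1 L2 r N
    (Pmap r T N B1 B2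
       (fun s t q => l s t * U q) (fun s t q => m s t * V q)
       (fun s t q => n s t * W q) (fun s t q => p s t * X q))
    t0 q0
  <->
  (forall s, inI L1 L2 s ->
     n s t0 * W q0 = 0 /\ p s t0 * X q0 = 0 /\
     nt s t0 * W q0 * p s t0 * X' q0 - n s t0 * W' q0 * pt s t0 * X q0 <> 0).
Proof.
  assert (DER : forall s, inI L1 L2 s ->
    vderiv (fun t' => Pmap r T N B1 B2
       (fun s t q => l s t * U q) (fun s t q => m s t * V q)
       (fun s t q => n s t * W q) (fun s t q => p s t * X q) s t' q0) t0
      (vadd (vscale (nt s t0 * W q0) (B1 s)) (vscale (pt s t0 * X q0) (B2 s))) /\
    vderiv (fun q' => Pmap r T N B1 B2
       (fun s t q => l s t * U q) (fun s t q => m s t * V q)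
       (fun s t q => n s t * W q) (fun s t q => p s t * X q) s t0 q') q0
      (vadd (vscale (n s t0 * W' q0) (B1 s)) (vscale (p s t0 * X' q0) (B2 s)))).
  { intros s Hs.
    destruct (proj1 Hl s t0 Hs Ht0) as [ls0 lt0].
    destruct (proj1 Hm s t0 Hs Ht0) as [ms0 mt0].
    destruct (proj1 Hn s t0 Hs Ht0) as [ns0 nt0].
    destruct (proj1 Hp s t0 Hs Ht0) as [ps0 pt0].
    pose proof (proj1 HU q0 Hq0). pose proof (proj1 HV q0 Hq0).
    pose proof (proj1 HW q0 Hq0). pose proof (proj1 HX q0 Hq0).
    split; (eapply vderiv_ext; [unfold Pmap; cbv beta; dtac |]);
      apply V4ext; unfold vadd, vscale, vzero; cbn [c1 c2 c3 c4];
      rewrite ?HU0, ?HV0, ?HU'0, ?HV'0; ring. }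
  split.
  - intros [H1 H2] s Hs.
    destruct (Hframe s Hs) as (tt & nn & bb1 & bb2 & tn & tb1 & tb2 & nb1 & nb2 & b1b2 & _).
    specialize (H1 s Hs). unfold Pmap in H1.
    pose proof (f_equal (fun v => vdot v (B1 s)) H1) as E1.
    pose proof (f_equal (fun v => vdot v (B2 s)) H1) as E2.
    cbv beta in E1, E2.
    rewrite !vdot_add_l, !vdot_scale_l in E1, E2.
    rewrite (vdot_comm (B2 s) (B1 s)) in E1.
    rewrite tb1, nb1, bb1, b1b2, HU0, HV0 in E1.
    rewrite tb2, nb2, bb2, b1b2, HU0, HV0 in E2.
    assert (HnW : n s t0 * W q0 = 0) by nra.
    assert (HpX : p s t0 * X q0 = 0) by nra.
    split; [exact HnW | split; [exact HpX |]].
    destruct (H2 s Hs) as (Ps & Pt & Pq & DPs & DPt & DPq & Hind & _).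
    destruct (DER s Hs) as [DPt' DPq'].
    pose proof (vderiv_unique _ _ _ _ DPt DPt') as EPt.
    pose proof (vderiv_unique _ _ _ _ DPq DPq') as EPq.
    set (a := nt s t0 * W q0) in *. set (b := pt s t0 * X q0) in *.
    set (c := n s t0 * W' q0) in *. set (d := p s t0 * X' q0) in *.
    intro Hdet.
    assert (D0 : a * d - b * c = 0) by (unfold a, b, c, d in *; rewrite <- Hdet; ring).
    destruct (Req_dec a 0) as [Ha | Ha].
    + destruct (Req_dec c 0) as [Hc | Hc].
      * destruct (Req_dec b 0) as [Hb | Hb].
        -- destruct (Hind 0 1 0) as (_ & C & _); [|lra].
           eapply combo_zero; [exact EPt | exact EPq | reflexivity | |]; lra.
        -- destruct (Hind 0 d (-b)) as (_ & _ & C); [|lra].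
           eapply combo_zero; [exact EPt | exact EPq | reflexivity | |]; nra.
      * destruct (Hind 0 c (-a)) as (_ & C & _); [|lra].
        eapply combo_zero; [exact EPt | exact EPq | reflexivity | |]; nra.
    + destruct (Hind 0 c (-a)) as (_ & _ & C); [|lra].
      eapply combo_zero; [exact EPt | exact EPq | reflexivity | |]; nra.
  - intros H. split.
    + intros s Hs. destruct (H s Hs) as (HnW & HpX & _).
      unfold Pmap; apply V4ext; unfold vadd, vscale; cbn [c1 c2 c3 c4];
      rewrite HU0, HV0, HnW, HpX; ring.
    + intros s Hs. destruct (H s Hs) as (HnW & HpX & Hdet).
      destruct (Hframe s Hs) as (tt & nn & bb1 & bb2 & tn & tb1 & tb2 & nb1 & nb2 & b1b2
        & _ & dr & dT & dN & dB1 & dB2).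
      destruct (DER s Hs) as [DPt DPq].
      set (Ps := vadd (T s) (vadd (vscale (ns s t0 * W q0) (B1 s)) (vscale (ps s t0 * X q0) (B2 s)))).
      assert (DPs : vderiv (fun s' => Pmap r T N B1 B2
       (fun s t q => l s t * U q) (fun s t q => m s t * V q)
       (fun s t q => n s t * W q) (fun s t q => p s t * X q) s' t0 q0) s Ps).
      { destruct (proj1 Hl s t0 Hs Ht0) as [ls0 lt0].
        destruct (proj1 Hm s t0 Hs Ht0) as [ms0 mt0].
        destruct (proj1 Hn s t0 Hs Ht0) as [ns0 nt0].
        destruct (proj1 Hp s t0 Hs Ht0) as [ps0 pt0].
        eapply vderiv_ext; [unfold Pmap; cbv beta; dtac |].
        unfold Ps; apply V4ext; unfold vadd, vscale, vzero; cbn [c1 c2 c3 c4];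
        rewrite ?HU0, ?HV0, ?HnW, ?HpX; ring. }
      eexists Ps, _, _; split; [exact DPs | split; [exact DPt | split; [exact DPq |]]].
      set (a := nt s t0 * W q0) in *. set (b := pt s t0 * X q0) in *.
      set (c := n s t0 * W' q0) in *. set (d := p s t0 * X' q0) in *.
      assert (D0 : a * d - b * c <> 0) by (unfold a, b, c, d in *; intro E; apply Hdet; rewrite <- E; ring).
      split.
      * intros al be ga E.
        pose proof (f_equal (fun v => vdot v (T s)) E) as F0.
        pose proof (f_equal (fun v => vdot v (B1 s)) E) as F1.
        pose proof (f_equal (fun v => vdot v (B2 s)) E) as F2.
        cbv beta in F0, F1, F2. unfold Ps in F0, F1, F2.
        repeat (rewrite ?vdot_add_l, ?vdot_scale_l, ?vdot_zero_l in F0); repeat (rewrite ?vdot_add_l, ?vdot_scale_l, ?vdot_zero_l in F1); repeat (rewrite ?vdot_add_l, ?vdot_scale_l, ?vdot_zero_l in F2).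
        rewrite (vdot_comm (B1 s) (T s)), (vdot_comm (B2 s) (T s)) in F0.
        rewrite (vdot_comm (B2 s) (B1 s)) in F1.
        rewrite tt, tb1, tb2 in F0. rewrite tb1, bb1, b1b2 in F1. rewrite tb2, b1b2, bb2 in F2.
        assert (Hal : al = 0) by nra.
        subst al.
        assert (G1 : be * (a * d - b * c) = 0).
        { transitivity (d * (be * a + ga * c) - c * (be * b + ga * d)); [ring|].
          transitivity (d * 0 - c * 0); [f_equal; f_equal; nra | ring]. }
        assert (G2 : ga * (a * d - b * c) = 0).
        { transitivity (a * (be * b + ga * d) - b * (be * a + ga * c)); [ring|].
          transitivity (a * 0 - b * 0); [f_equal; f_equal; nra | ring]. }
        apply Rmult_integral in G1, G2.
        destruct G1; [|contradiction]; destruct G2; [|contradiction]. lra.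
      * unfold Ps; rewrite cross_lin.
        set (C := cross4 (T s) (B1 s) (B2 s)).
        exists ((a * d - b * c) * vdot C (N s)).
        assert (HC : C = vscale (vdot C (N s)) (N s)).
        { assert (Z : vadd C (vscale (- vdot C (N s)) (N s)) = vzero).
          { apply (complete (T s) (N s) (B1 s) (B2 s)); auto;
              rewrite vdot_add_l, vdot_scale_l; unfold C.
            - rewrite cross_orth1, (vdot_comm (N s) (T s)), tn; ring.
            - rewrite nn; ring.
            - rewrite cross_orth2, nb1; ring.
            - rewrite cross_orth3, nb2; ring. }
          apply V4ext;
          [ pose proof (f_equal c1 Z) as Z' | pose proof (f_equal c2 Z) as Z'
          | pose proof (f_equal c3 Z) as Z' | pose proof (f_equal c4 Z) as Z'];
          unfold vadd, vscale, vzero in Z'; cbn [c1 c2 c3 c4] in Z'; cbn [c1 c2 c3 c4 vscale]; lra. }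
        rewrite HC at 1. apply V4ext; unfold vscale; cbn [c1 c2 c3 c4]; ring.
Qed.
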